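(* Let $k$ and $r$ be positive integers, let $G$ be a graph with $\chi(G)\le r$, and let $P\subset V(G)$. Suppose $|\mathcal{D}_G(P,3)|\le \frac{1}{2}k(k+1)$. Then for each precoloring $d\colon P\to[r+1]$ of $P$ in $G$, there exists a proper coloring $f\colon V(G)\to[r+k]$ of $G$ with $f(u)=d(u)$ for each $u\in P$.
   Context: For a graph $G$, $P\subset V(G)$ and a positive integer $k$, $\mathcal{D}_G(P,k)=\{\{x,y\}\subset P: x\ne y,\ d_G(x,y)\le k\}$, where $d_G$ is the distance in $G$. For a positive integer $m$, $[m]=\{1,\dots,m\}$. A precoloring of $P$ in $G$ is a proper coloring of the induced subgraph $G[P]$. *)

(* Defs.v *)
From mathcomp Require Import all_boot.
Set Implicit Arguments. Unset Strict Implicit. Unset Printing Implicit Defensive.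

Definition simple_graph (T : finType) (e : rel T) : Prop :=
  symmetric e /\ irreflexive e.

Definition dist_le (T : finType) (e : rel T) (k : nat) (x y : T) : bool :=
  [exists n : 'I_k.+1, exists s : n.-tuple T, path e x s && (last x s == y)].

Definition Dpairs (T : finType) (e : rel T) (P : {set T}) (k : nat)
  : {set {set T}} :=
  [set S : {set T} | [&& S \subset P, #|S| == 2 &
     [forall x in S, forall y in S, dist_le e k x y]]].

Definition proper_on (T : finType) (e : rel T) (A : {set T}) (m : nat)
  (f : T -> nat) : Prop :=
  (forall x, x \in A -> 1 <= f x <= m) /\
  (forall x y, x \in A -> y \in A -> e x y -> f x != f y).

Definition proper_coloring (T : finType) (e : rel T) (m : nat) (f : T -> nat) :=
  proper_on e [set: T] m f.

Definition chi_le (T : finType) (e : rel T) (r : nat) : Prop :=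
  exists f : T -> nat, proper_coloring e r f.

(* Main.v *)
Require Import Defs.
From mathcomp Require Import all_boot.
From mathcomp Require Import zify.
Set Implicit Arguments. Unset Strict Implicit. Unset Printing Implicit Defensive.

Definition hadj (T : finType) (e : rel T) (x y : T) :=
  (x != y) && dist_le e 3 x y && dist_le e 3 y x.

Lemma dl0 (T : finType) (e : rel T) x : dist_le e 3 x x.
Proof. by apply/existsP; exists (@Ordinal 4 0 isT); apply/existsP; exists (in_tuple [::]) => /=; rewrite eqxx. Qed.

Lemma dl1 (T : finType) (e : rel T) x y : e x y -> dist_le e 3 x y.
Proof.
move=> h; apply/existsP; exists (@Ordinal 4 1 isT); apply/existsP.
by exists [tuple y] => /=; rewrite h eqxx.
Qed.

Lemma dl2 (T : finType) (e : rel T) x y z : e x y -> e y z -> dist_le e 3 x z.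
Proof.
move=> h1 h2; apply/existsP; exists (@Ordinal 4 2 isT); apply/existsP.
by exists [tuple y; z] => /=; rewrite h1 h2 eqxx.
Qed.

Lemma dl3 (T : finType) (e : rel T) x y z w :
  e x y -> e y z -> e z w -> dist_le e 3 x w.
Proof.
move=> h1 h2 h3; apply/existsP; exists (@Ordinal 4 3 isT); apply/existsP.
by exists [tuple y; z; w] => /=; rewrite h1 h2 h3 eqxx.
Qed.

Lemma step (T : finType) (e : rel T) (P : {set T}) (d : T -> nat) (N : nat)
  (S I : {set T}) (f : T -> nat) :
  simple_graph e ->
  (forall x y, x \in P -> y \in P -> e x y -> d x != d y) ->
  (forall u, u \in P -> 1 <= d u <= N.+1) ->
  S \subset P -> I \subset P ->
  proper_coloring e N f -> {in S, forall u, f u = d u} ->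
  (forall x y, x \in I -> y \in I -> hadj e x y -> d x = N.+1) ->
  exists g, proper_coloring e N.+1 g /\ {in S :|: I, forall u, g u = d u}.
Proof.
move=> [esym eirr] dP dR SP IP [fR fP] fS Iind.
have fN : forall v, f v <= N by move=> v; have /andP[] := fR v (in_setT v).
pose rec v := [exists p in I, e v p && (f v == d p)].
exists (fun v => if v \in I then d v else if rec v then N.+1 else f v).
have H1 : forall x y, x \in I -> y \notin I -> e x y ->
    d x != (if rec y then N.+1 else f y).
  move=> x y xI yI exy; case: ifP => recy.
    case/existsP: recy => p /andP[pI /andP[eyp /eqP fyp]].
    apply/eqP => dx.
    case: (eqVneq x p) => [xp|xp].
      by have := fN y; rewrite fyp -xp dx ltnn.
    have hp : hadj e p x.
      by rewrite /hadj eq_sym xp (dl2 (y:=y)) ?(dl2 (y:=y)) // esym.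
    by have := fN y; rewrite fyp (Iind p x pI xI hp) ltnn.
  apply/negP => /eqP dxf; suff : rec y by rewrite recy.
  apply/exists_inP; exists x => //.
  by rewrite esym exy dxf eqxx.
split; [split|].
- move=> x _; case: ifP => xI.
    by have := dR x (subsetP IP x xI).
  case: ifP => _; first by rewrite leqnn.
  by have /andP[h1 h2] := fR x (in_setT x); rewrite h1 leqW.

- move=> x y _ _ exy.
  case xI: (x \in I); case yI: (y \in I).
  + have hxy : hadj e x y.
      have eyx : e y x by rewrite esym.
      rewrite /hadj (dl1 exy) (dl1 eyx) !andbT; apply/negP => /eqP xy.
      by rewrite xy eirr in exy.
    have hyx : hadj e y x.
      by move: hxy; rewrite /hadj eq_sym => /andP[/andP[-> ->] ->].
    have := dP x y (subsetP IP x xI) (subsetP IP y yI) exy.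
    by rewrite (Iind x y xI yI hxy) (Iind y x yI xI hyx) eqxx.
  + by apply: H1 => //; rewrite yI.
  + by rewrite eq_sym; apply: H1 => //; [rewrite xI | rewrite esym].
  + case: ifP => recx; case: ifP => recy.
    * case/existsP: recx => p /andP[pI /andP[exp /eqP fxp]].
      case/existsP: recy => q /andP[qI /andP[eyq /eqP fyq]].
      case: (eqVneq p q) => [pq|pq].
        by have := fP x y (in_setT x) (in_setT y) exy; rewrite fxp fyq pq eqxx.
      have hpq : hadj e p q.
        have epx : e p x by rewrite esym.
        have eqy : e q y by rewrite esym.
        have eyx : e y x by rewrite esym.
        by rewrite /hadj pq (dl3 epx exy eyq) (dl3 eqy eyx exp).
      by have := fN x; rewrite fxp (Iind p q pI qI hpq) ltnn.
    * by rewrite eq_sym neq_ltn ltnS fN.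
    * by rewrite neq_ltn ltnS fN.
    * exact: fP.
- move=> u; rewrite in_setU => /orP[uS|uI]; last by rewrite uI.
  case: ifP => uI //; case: ifP => recu; last exact: fS.
  case/existsP: recu => p /andP[pI /andP[eup /eqP fup]].
  have := dP u p (subsetP SP u uS) (subsetP IP p pI) eup.
  by rewrite -fup fS ?eqxx.
Qed.

Lemma layers (T : finType) (e : rel T) (P : {set T}) (d : T -> nat) (r k : nat)
  (P' : {set T}) (c L : T -> nat) :
  simple_graph e ->
  (forall x y, x \in P -> y \in P -> e x y -> d x != d y) ->
  (forall u, u \in P -> 1 <= d u <= r.+1) ->
  P' \subset P -> proper_coloring e r c ->
  (forall x y, x \in P' -> y \in P' -> hadj e x y -> L x != L y) ->
  (forall x, x \in P' -> L x < k) ->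
  exists g, proper_coloring e (r + k) g /\ {in P', forall u, g u = d u}.
Proof.
move=> sg dP dR P'P cc Lind Lk.
suff: forall j, exists g, proper_coloring e (r + j) g /\
   {in [set x in P' | L x < j], forall u, g u = d u}.
  case/(_ k) => g [gc gd]; exists g; split => // u uP.
  by apply: gd; rewrite inE uP Lk.
elim => [|j [g [gc gd]]].
  by exists c; rewrite addn0; split => // u; rewrite inE ltn0 andbF.
have := @step T e P d (r + j) [set x in P' | L x < j] [set x in P' | L x == j] g
  sg dP _ _ _ gc gd.
case.
- by move=> u /dR; lia.
- by apply/subsetP => x; rewrite inE => /andP[/(subsetP P'P)].
- by apply/subsetP => x; rewrite inE => /andP[/(subsetP P'P)].
- move=> x y; rewrite !inE => /andP[xP /eqP Lx] /andP[yP /eqP Ly] hxy.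
  by have := Lind x y xP yP hxy; rewrite Lx Ly eqxx.
move=> g' [g'c g'd]; exists g'; rewrite addnS; split => // u.
rewrite inE ltnS leq_eqVlt => /andP[uP /orP[/eqP Lu|Lu]]; apply: g'd;
  by rewrite !inE uP Lu ?eqxx ?orbT.
Qed.

Lemma greedy (T : finType) (h : rel T) (k : nat) (P' : {set T}) :
  0 < k -> symmetric h -> irreflexive h ->
  (forall x, x \in P' -> #|[set y in P' | h x y]| < k) ->
  exists L : T -> nat, (forall x, L x < k) /\
    forall x y, x \in P' -> y \in P' -> h x y -> L x != L y.
Proof.
move=> k0 hsym hirr hdeg.
suff: forall n (A : {set T}), #|A| <= n -> A \subset P' ->
  exists L : T -> 'I_k, forall x y, x \in A -> y \in A -> h x y -> L x != L y.
  case/(_ #|P'| P' (leqnn _) (subxx _)) => L HL.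
  by exists (fun x => nat_of_ord (L x)); split => // x y xP yP hxy; apply: HL.
elim => [|n IH] A.
  rewrite leqn0 cards_eq0 => /eqP -> _.
  by exists (fun _ => Ordinal k0) => x y; rewrite inE.
move=> An AP.
case: (set_0Vmem A) => [->|[x xA]].
  by exists (fun _ => Ordinal k0) => y z; rewrite inE.
have [||L' HL'] := IH (A :\ x).
  by move: An; rewrite (cardsD1 x A) xA.
  by apply: subset_trans AP; apply: subsetDl.
pose U := [set L' y | y in [set y in P' | h x y]].
have [c0 c0U] : exists c0, c0 \notin U.
  case: (pickP (fun c0 => c0 \notin U)) => [c0 Hc|H]; first by exists c0.
  have : #|'I_k| <= #|U|.
    rewrite -cardsT; apply: subset_leq_card; apply/subsetP => c _.
    by move: (H c) => /negbFE.
  have := leq_imset_card L' [set y in P' | h x y].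
  have := hdeg x (subsetP AP x xA).
  rewrite /U card_ord => h1 h2 h3; have := leq_trans h3 h2; by rewrite leqNgt h1.
exists (fun y => if y == x then c0 else L' y) => y z yA zA hyz.
have hxz : forall z, z \in A -> h x z -> c0 != L' z.
  move=> w wA hxw; apply/eqP => c0w; move: c0U; rewrite c0w.
  by rewrite imset_f // inE (subsetP AP w wA) hxw.
case: (eqVneq y x) => [yx|yx]; case: (eqVneq z x) => [zx|zx].
- by move: hyz; rewrite yx zx hirr.
- by apply: hxz => //; rewrite -yx.
- by rewrite eq_sym; apply: hxz => //; rewrite -zx hsym.
- by apply: HL' => //; rewrite !inE ?yx ?zx.
Qed.

Lemma pairD (T : finType) (e : rel T) (P' : {set T}) x y :
  x \in P' -> y \in P' -> hadj e x y -> [set x; y] \in Dpairs e P' 3.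
Proof.
move=> xP yP /andP[/andP[xy dxy] dyx].
rewrite inE cards2 xy /=; apply/andP; split.
  by apply/subsetP => z /set2P[]->.
apply/forallP => a; apply/implyP => /set2P[]->; apply/forallP => b;
  apply/implyP => /set2P[]->; by rewrite ?dl0.
Qed.

Lemma hadj_sym (T : finType) (e : rel T) : symmetric (hadj e).
Proof. by move=> x y; rewrite /hadj eq_sym -!andbA [dist_le e 3 x y && _]andbC. Qed.

Lemma hadj_irr (T : finType) (e : rel T) : irreflexive (hadj e).
Proof. by move=> x; rewrite /hadj eqxx. Qed.

Lemma swap_inj (a b : nat) :
  injective (fun v => if v == a then b else if v == b then a else v).
Proof.
move=> u v /=; case: (eqVneq u a); case: (eqVneq v a); case: (eqVneq u b);
  case: (eqVneq v b); lia.
Qed.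

Lemma mainL (T : finType) (e : rel T) (P : {set T}) (d c : T -> nat) (r : nat) :
  simple_graph e -> proper_coloring e r c -> proper_on e P (r + 1) d ->
  forall k, 0 < k -> forall P' : {set T}, P' \subset P ->
  2 * #|Dpairs e P' 3| <= k * (k + 1) ->
  exists g, proper_coloring e (r + k) g /\ {in P', forall u, g u = d u}.
Proof.
move=> sg cc [dR0 dP].
have dR : forall u, u \in P -> 1 <= d u <= r.+1 by move=> u /dR0; rewrite addn1.
elim => // k IH _ P' P'P Dm.
case: (posnP k) => [k0|kpos].
- subst k.
  have D1 : #|Dpairs e P' 3| <= 1 by lia.
  case: (set_0Vmem (Dpairs e P' 3)) => [D0|[S0 S0D]].
    apply: (@layers T e P d r 1 P' c (fun _ => 0)) => //.
    move=> x y xP yP hxy; have := pairD xP yP hxy.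
    by rewrite D0 inE.
  have uniqD : forall S, S \in Dpairs e P' 3 -> S = S0.
    by move=> S SD; move/card_le1_eqP: D1; apply.
  have S0P : S0 \subset P' by move: S0D; rewrite inE => /andP[].
  case: (boolP [exists x in S0, d x <= r]) => [/exists_inP[x xS dx]|nex].
  + have xP' : x \in P' by apply: (subsetP S0P).
    have xP : x \in P by apply: (subsetP P'P).
    pose c' v := if c v == c x then d x else if c v == d x then c x else c v.
    have cR : forall v, 1 <= c v <= r by move=> v; case: cc => + _; apply; apply: in_setT.
    have c'c : proper_coloring e r c'.
      split.
        move=> v _; rewrite /c'; case: ifP => _; first by have := dR x xP; lia.
        by case: ifP => _; apply: cR.
      move=> u v _ _ euv; apply/negP => /eqP E.
      have := cc.2 u v (in_setT u) (in_setT v) euv.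
      by rewrite (@swap_inj (c x) (d x) (c u) (c v) E) eqxx.
    have := @step T e P d r [set x] (P' :\ x) c' sg dP dR _ _ c'c _ _.
    case.
    * by rewrite sub1set.
    * by apply: subset_trans P'P; apply: subsetDl.
    * by move=> u; rewrite inE => /eqP ->; rewrite /c' eqxx.
    * move=> u v; rewrite !inE => /andP[ux uP] /andP[vx vP] huv.
      have := uniqD _ (pairD uP vP huv) => E.
      by move: xS; rewrite -E => /set2P[] xu; [move: ux | move: vx];
        rewrite xu eqxx.
    move=> g [gc gd]; exists g; rewrite addn1; split => // u uP.
    by apply: gd; rewrite !inE uP andbT orbN.
  + have := @step T e P d r set0 P' c sg dP dR (sub0set _) P'P cc _ _.
    case.
    * by move=> u; rewrite inE.
    * move=> u v uP vP huv.
      have := uniqD _ (pairD uP vP huv) => E.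
      have uS : u \in S0 by rewrite -E set21.
      have := dR u (subsetP P'P u (subsetP S0P u uS)).
      move/exists_inP: nex => nex.
      have : ~~ (d u <= r) by apply/negP => h; apply: nex; exists u.
      lia.
    move=> g [gc gd]; exists g; rewrite addn1; split => // u uP.
    by apply: gd; rewrite set0U.
- pose deg p := #|[set S in Dpairs e P' 3 | p \in S]|.
  case: (boolP [exists p in P', k.+1 <= deg p]) => [/exists_inP[p pP dp]|nex].
  + have sub : Dpairs e (P' :\ p) 3 \subset
        Dpairs e P' 3 :\: [set S in Dpairs e P' 3 | p \in S].
      apply/subsetP => S; rewrite !inE => /andP[SP' rest].
      have pS : p \notin S.
        by apply/negP => /(subsetP SP'); rewrite !inE eqxx.
      have SP : S \subset P' by apply: subset_trans SP' (subsetDl _ _).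
      by rewrite (negbTE pS) andbF SP rest.
    have := subset_leq_card sub.
    rewrite cardsD.
    have -> : Dpairs e P' 3 :&: [set S in Dpairs e P' 3 | p \in S]
        = [set S in Dpairs e P' 3 | p \in S].
      by apply/setIidPr; apply/subsetP => S; rewrite inE => /andP[].
    rewrite -/(deg p) => Dle.
    have arith : forall a b c : nat, a <= b - c -> k.+1 <= c ->
        2 * b <= k.+1 * (k.+1 + 1) -> 2 * a <= k * (k + 1).
      by move=> a b c0; clear; nia.
    have [||g [gc gd]] := IH kpos (P' :\ p).
      by apply: subset_trans P'P; apply: subsetDl.
      exact: arith Dle dp Dm.
    have pP0 : p \in P by apply: (subsetP P'P).
    have := @step T e P d (r + k) (P' :\ p) [set p] g sg dP _ _ _ gc gd _.
    case.
    * by move=> u /dR; lia.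
    * by apply: subset_trans P'P; apply: subsetDl.
    * by rewrite sub1set.
    * by move=> u v; rewrite !inE => /eqP -> /eqP ->; rewrite hadj_irr.
    move=> g' [g'c g'd]; exists g'; rewrite addnS; split => // u uP.
    apply: g'd; rewrite !inE uP andbT; by case: (u == p).
  + have [||L [Lk Lind]] := @greedy T (hadj e) k.+1 P' _ (@hadj_sym T e) (@hadj_irr T e).
      by [].
      move=> x xP.
      have : deg x <= k.
        by move/exists_inP: nex => nex; case: leqP => // h; exfalso; apply: nex; exists x.
      suff : #|[set y in P' | hadj e x y]| <= deg x by lia.
      rewrite -(@card_in_imset _ _ (fun y => [set x; y])).
        apply: subset_leq_card; apply/subsetP => S /imsetP[y].
        rewrite inE => /andP[yP hxy] ->.
        by rewrite inE pairD // set21.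
      move=> y z; rewrite !inE => /andP[yP hxy] /andP[zP hxz] E.
      have : y \in [set x; z] by rewrite -E set22.
      case/set2P => // yx.
      by move: hxy; rewrite yx hadj_irr.
    apply: (@layers T e P d r k.+1 P' c L) => //.
Qed.

Theorem theorem1 (T : finType) (e : rel T) (k r : nat) (P : {set T}) :
  simple_graph e -> 0 < k -> 0 < r -> chi_le e r ->
  2 * #|Dpairs e P 3| <= k * (k + 1) ->
  forall d : T -> nat, proper_on e P (r + 1) d ->
  exists f : T -> nat, proper_coloring e (r + k) f /\
    (forall u, u \in P -> f u = d u).
Proof.
move=> sg k0 r0 [c cc] Dm d dd.
have [g [gc gd]] := mainL sg cc dd k0 (subxx P) Dm.
by exists g.
Qed.
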